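(* Let $G$ be a group and $\mathcal{L}$ a first-order language. Let $\mathfrak{C}$ be one of the following four categories: $\mathfrak{M}_G$ (G-structures with $G$-equivariant morphisms), $\mathfrak{M}_G^{\leq}$ (G-structures with $G$-equivariant embeddings), $\mathfrak{M}_G^{\prec}$ (G-structures with $G$-equivariant elementary embeddings), $\mathfrak{M}_G^{\geq}$ (G-structures with $G$-equivariant submersions). Then $\mathfrak{C}$ is closed under colimits of directed systems: for every directed system $\{\mathcal{M}_i, \rho_{ki}\}_{i,k\in\mathcal{D}}$ of G-structures whose transition maps $\rho_{ki}$ are arrows of $\mathfrak{C}$, the colimit structure $\mathcal{M}=\operatorname{coLim}_{i\in\mathcal{D}}\mathcal{M}_i$ carries a well-defined action of $G$ given by $g[x]=[gx]$ (for $x\in M_i$), with which $\mathcal{M}$ is a G-structure and each canonical quotient map $q_i:\mathcal{M}_i\to\mathcal{M}$, $x\mapsto[x]$, is a $G$-equivariant morphism.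
   Context: A language is $\mathcal{L}=(\mathcal{F},\mathcal{R},\mathcal{C})$ with function, relation and constant symbols, each function/relation symbol having a positive arity. An $\mathcal{L}$-structure $\mathcal{M}$ has a nonempty universe $M$ and interpretations $f^{\mathcal{M}}:M^{n_f}\to M$, $R^{\mathcal{M}}\subset M^{n_R}$, $c^{\mathcal{M}}\in M$. A morphism $\alpha:\mathcal{M}\to\mathcal{N}$ is a map $M\to N$ with $\alpha(f^{\mathcal{M}}(\mathbf a))=f^{\mathcal{N}}(\alpha(\mathbf a))$, $\alpha(R^{\mathcal{M}})\subset R^{\mathcal{N}}$, $\alpha(c^{\mathcal{M}})=c^{\mathcal{N}}$. It is saturated if $\alpha^{-1}(R^{\mathcal{N}})\subset R^{\mathcal{M}}$ for all $R$; an embedding (resp. submersion) is an injective (resp. surjective) saturated morphism; an elementary embedding is an embedding with $\mathcal{M}\models\varphi(\mathbf a)\iff\mathcal{N}\models\varphi(\alpha(\mathbf a))$ for all formulas $\varphi$ and tuples $\mathbf a$. Given a group $G$, a G-structure is an $\mathcal{L}$-structure $\mathcal{M}$ together with an action of $G$ on $M$ such that: the set $\{c^{\mathcal{M}}:c\in\mathcal{C}\}$ is $G$-invariant; for each $R\in\mathcal{R}$, if $(x_1,\dots,x_{n})\in R^{\mathcal{M}}$ and $g_1,\dots,g_n\in G$ then $(g_1x_1,\dots,g_nx_n)\in R^{\mathcal{M}}$; and for each $f\in\mathcal{F}$ of arity $n$, $f^{\mathcal{M}}(gx_1,\dots,gx_n)=g f^{\mathcal{M}}(x_1,\dots,x_n)$.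 Directed system and colimit: $(\mathcal{D},\leq)$ is a poset such that any $i,j$ have some $k\leq i,j$; for $k\leq i$ there are morphisms $\rho_{ki}:\mathcal{M}_i\to\mathcal{M}_k$ with $\rho_{ii}=\mathrm{id}$ and $\rho_{lk}\rho_{ki}=\rho_{li}$. The colimit $\mathcal{M}$ has universe $\bigsqcup_i M_i/\sim$, where for $x\in M_i,y\in M_j$, $x\sim y$ iff there is $k\leq i,j$ with $\rho_{ki}(x)=\rho_{kj}(y)$; $[x]$ denotes the class (germ) of $x$, and germs of tuples are defined likewise. Interpretations: $f^{\mathcal{M}}([\mathbf x])=[f^{\mathcal{M}_i}(\mathbf x)]$ for $\mathbf x\in M_i^{n_f}$; $R^{\mathcal{M}}=\{[\mathbf x]:\mathbf x\in R^{\mathcal{M}_i}\text{ for some } i\}$; $c^{\mathcal{M}}=[c^{\mathcal{M}_i}]$ for any $i$. *)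

(* Defs.v *)
From mathcomp Require Import all_boot.
From Stdlib Require Import ClassicalEpsilon.

Set Implicit Arguments.
Unset Strict Implicit.
Unset Printing Implicit Defensive.

Record language := Language {
  Fsym : Type;
  Rsym : Type;
  Csym : Type;
  farity : Fsym -> nat;
  rarity : Rsym -> nat;
  farity_pos : forall f, 0 < farity f;
  rarity_pos : forall r, 0 < rarity r
}.

Record structure (L : language) := Structure {
  univ : Type;
  univ_ne : inhabited univ;
  finterp : forall f : Fsym L, ('I_(farity f) -> univ) -> univ;
  rinterp : forall r : Rsym L, ('I_(rarity r) -> univ) -> Prop;
  cinterp : Csym L -> univ
}.

Arguments finterp {L} s f xs.
Arguments rinterp {L} s r xs.
Arguments cinterp {L} s c.

Section Morphisms.
Variable L : language.
Implicit Types M N : structure L.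

Definition is_morphism M N (a : univ M -> univ N) : Prop :=
  (forall f xs, a (finterp M f xs) = finterp N f (fun j => a (xs j))) /\
  (forall r xs, rinterp M r xs -> rinterp N r (fun j => a (xs j))) /\
  (forall c, a (cinterp M c) = cinterp N c).

Definition is_saturated M N (a : univ M -> univ N) : Prop :=
  forall r xs, rinterp N r (fun j => a (xs j)) -> rinterp M r xs.

Definition is_embedding M N (a : univ M -> univ N) : Prop :=
  [/\ is_morphism a, is_saturated a & forall x y, a x = a y -> x = y].

Definition is_submersion M N (a : univ M -> univ N) : Prop :=
  [/\ is_morphism a, is_saturated a & forall y, exists x, a x = y].

Inductive term : Type :=
  | TVar : nat -> term
  | TCst : Csym L -> term
  | TApp : forall f : Fsym L, ('I_(farity f) -> term) -> term.

Inductive formula : Type :=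
  | FFalse : formula
  | FEq : term -> term -> formula
  | FRel : forall r : Rsym L, ('I_(rarity r) -> term) -> formula
  | FNeg : formula -> formula
  | FAnd : formula -> formula -> formula
  | FEx : nat -> formula -> formula.

Fixpoint teval M (v : nat -> univ M) (t : term) : univ M :=
  match t with
  | TVar n => v n
  | TCst c => cinterp M c
  | TApp f ts => finterp M f (fun j => teval v (ts j))
  end.

Definition upd M (v : nat -> univ M) (n : nat) (a : univ M) : nat -> univ M :=
  fun m => if m == n then a else v m.

Fixpoint sat M (v : nat -> univ M) (phi : formula) : Prop :=
  match phi with
  | FFalse => False
  | FEq t1 t2 => teval v t1 = teval v t2
  | FRel r ts => rinterp M r (fun j => teval v (ts j))
  | FNeg p => ~ sat v p
  | FAnd p q => sat v p /\ sat v q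
  | FEx n p => exists a, sat (upd v n a) p
  end.

Definition is_elementary_embedding M N (a : univ M -> univ N) : Prop :=
  is_embedding a /\
  forall (phi : formula) (v : nat -> univ M), sat v phi <-> sat (fun n => a (v n)) phi.

End Morphisms.

Record group := Group {
  gcar : Type;
  gmul : gcar -> gcar -> gcar;
  gone : gcar;
  ginv : gcar -> gcar;
  gmulA : forall x y z, gmul x (gmul y z) = gmul (gmul x y) z;
  gmul1 : forall x, gmul gone x = x;
  gmulV : forall x, gmul (ginv x) x = gone
}.

Definition is_action (G : group) (X : Type) (act : gcar G -> X -> X) : Prop :=
  (forall x, act (@gone G) x = x) /\
  (forall g h x, act (@gmul G g h) x = act g (act h x)).

Definition is_Gstructure (G : group) (L : language) (M : structure L)
    (act : gcar G -> univ M -> univ M) : Prop :=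
  [/\ is_action act,
      (forall g c, exists c', act g (cinterp M c) = cinterp M c'),
      (forall r xs (gs : 'I_(rarity r) -> gcar G),
          rinterp M r xs -> rinterp M r (fun j => act (gs j) (xs j)))
    & (forall f g xs, finterp M f (fun j => act g (xs j)) = act g (finterp M f xs))].

Definition is_equivariant (G : group) (X Y : Type)
    (actX : gcar G -> X -> X) (actY : gcar G -> Y -> Y) (a : X -> Y) : Prop :=
  forall g x, a (actX g x) = actY g (a x).

Inductive Gcategory := CatMor | CatEmb | CatElem | CatSub.

Definition is_arrow (C : Gcategory) (G : group) (L : language)
    (M N : structure L) (actM : gcar G -> univ M -> univ M)
    (actN : gcar G -> univ N -> univ N) (a : univ M -> univ N) : Prop :=
  is_equivariant actM actN a /\
  match C with
  | CatMor => is_morphism a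
  | CatEmb => is_embedding a
  | CatElem => is_elementary_embedding a
  | CatSub => is_submersion a
  end.

(* (D, le) directed poset: any i, j have some k <= i, j; for k <= i a map
   rho k i : M_i -> M_k.  rho is given as a total function, only its values
   for k <= i matter. *)
Unset Implicit Arguments.
Record dsystem (L : language) := DSystem {
  dom : Type;
  dle : dom -> dom -> Prop;
  dle_refl : forall i, dle i i;
  dle_antisym : forall i j, dle i j -> dle j i -> i = j;
  dle_trans : forall i j k, dle i j -> dle j k -> dle i k;
  dle_directed : forall i j, exists k, dle k i /\ dle k j;
  dom_ne : inhabited dom;
  dstr : dom -> structure L;
  drho : forall k i, univ (dstr i) -> univ (dstr k);
  drho_id : forall i (x : univ (dstr i)), drho i i x = x;
  drho_comp : forall l k i (x : univ (dstr i)), dle l k -> dle k i ->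
      drho l k (drho k i x) = drho l i x
}.

Set Implicit Arguments.
Arguments dom {L} d.
Arguments dom_ne {L} d.
Arguments dle {L} d _ _.
Arguments dstr {L} d _.
Arguments drho {L} d k i _.

Section Colimit.
Variables (L : language) (S : dsystem L).

Definition germ_pre := {i : dom S & univ (dstr S i)}.

Definition germ_equiv (x y : germ_pre) : Prop :=
  exists k, [/\ dle S k (projT1 x), dle S k (projT1 y) &
    drho S k (projT1 x) (projT2 x) = drho S k (projT1 y) (projT2 y)].

Definition colim_univ : Type :=
  {P : germ_pre -> Prop | exists x, P = germ_equiv x}.

Definition germ (i : dom S) (x : univ (dstr S i)) : colim_univ :=
  exist _ (germ_equiv (existT _ i x)) (ex_intro _ (existT _ i x) erefl).

Lemma colim_ne : inhabited colim_univ.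
Proof.
case: (dom_ne S) => i; case: (univ_ne (dstr S i)) => x.
exact: inhabits (germ x).
Qed.

Definition colim_fun (f : Fsym L) (ys : 'I_(farity f) -> colim_univ) : colim_univ :=
  epsilon colim_ne (fun z => exists i (xs : 'I_(farity f) -> univ (dstr S i)),
     (forall j, germ (xs j) = ys j) /\ z = germ (finterp (dstr S i) f xs)).

Definition colim_rel (r : Rsym L) (ys : 'I_(rarity r) -> colim_univ) : Prop :=
  exists i (xs : 'I_(rarity r) -> univ (dstr S i)),
     (forall j, germ (xs j) = ys j) /\ rinterp (dstr S i) r xs.

Definition colim_cst (c : Csym L) : colim_univ :=
  epsilon colim_ne (fun z => exists i, z = germ (cinterp (dstr S i) c)).

Definition colim : structure L :=
  Structure colim_ne colim_fun colim_rel colim_cst.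

End Colimit.

(* Main.v *)
Require Import Defs.
From mathcomp Require Import all_boot.
From Stdlib Require Import ClassicalEpsilon FunctionalExtensionality PropExtensionality ProofIrrelevance.

Lemma arrow_mor C G L (M N : structure L) aM aN (a : univ M -> univ N) :
  @is_arrow C G L M N aM aN a -> is_morphism a /\ is_equivariant aM aN a.
Proof. case=> He; case: C => [H|[H _ _]|[[H _ _] _]|[H _ _]]; by split. Qed.

Lemma ge_sym L (S : dsystem L) x y : germ_equiv (S:=S) x y -> germ_equiv (S:=S) y x.
Proof. by case=> k [h1 h2 h3]; exists k; split. Qed.

Lemma ge_trans L (S : dsystem L) x y z :
  germ_equiv (S:=S) x y -> germ_equiv (S:=S) y z -> germ_equiv (S:=S) x z.
Proof.
case=> k [h1 h2 h3] [k' [h1' h2' h3']].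
case: (dle_directed _ S k k') => m [hm hm'].
exists m; split; first exact: dle_trans _ _ _ _ _ hm h1.
  exact: dle_trans _ _ _ _ _ hm' h2'.
rewrite -(drho_comp _ _ _ _ _ _ hm h1) h3 (drho_comp _ _ _ _ _ _ hm h2).
by rewrite -(drho_comp _ _ _ _ _ _ hm' h1') h3' (drho_comp _ _ _ _ _ _ hm' h2').
Qed.

Lemma ge_refl L (S : dsystem L) x : germ_equiv (S:=S) x x.
Proof. by exists (projT1 x); split => //; apply: (dle_refl _ S). Qed.

Arguments ge_sym {L S x y}.
Arguments ge_trans {L S x y z}.
Arguments ge_refl {L S x}.

Lemma germ_eqP L (S : dsystem L) i j (x : univ (dstr S i)) (y : univ (dstr S j)) :
  germ x = germ y <-> germ_equiv (existT _ i x) (existT _ j y).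
Proof.
split.
  move=> /(f_equal (@proj1_sig _ _)) /= E.
  rewrite E; exact: ge_refl.
move=> H; rewrite /germ.
have E : germ_equiv (existT _ i x) = germ_equiv (existT _ j y).
  apply: functional_extensionality => z; apply: propositional_extensionality.
  split => Hz; first exact: (ge_trans (ge_sym H) Hz).
  exact: (ge_trans H Hz).
move: (ex_intro _ _ _) (ex_intro _ _ _); rewrite E => p q.
by rewrite (proof_irrelevance _ p q).
Qed.

Lemma germ_surj L (S : dsystem L) (z : colim_univ S) :
  exists p : germ_pre S, z = germ (projT2 p).
Proof.
case: z => P E; case: (E) => p Ep; exists p; subst P; rewrite /germ.
case: p E => i x /= E.
by congr exist; apply: proof_irrelevance.
Qed.

Arguments germ_surj {L S}.

Lemma germ_rho L (S : dsystem L) k i (x : univ (dstr S i)) :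
  dle S k i -> germ (drho S k i x) = germ x.
Proof.
move=> H; apply/germ_eqP; exists k; split => //=; first exact: (dle_refl _ S).
by rewrite drho_id.
Qed.

Arguments germ_rho {L S k i x}.

Lemma lower_bound L (S : dsystem L) n (I : 'I_n -> dom S) :
  exists k, forall j, dle S k (I j).
Proof.
elim: n I => [|n IH] I.
  case: (dom_ne S) => k; exists k; by case.
case: (IH (fun j => I (lift ord0 j))) => k Hk.
case: (dle_directed _ S k (I ord0)) => m [h1 h2].
exists m => j; case: (unliftP ord0 j) => [j' ->|->] //.
exact: dle_trans _ _ _ _ _ h1 (Hk j').
Qed.

Arguments lower_bound {L S n}.

Lemma family L (S : dsystem L) n (ys : 'I_n -> colim_univ S) :
  exists k (xs : 'I_n -> univ (dstr S k)), forall j, germ (xs j) = ys j.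
Proof.
pose pick j := proj1_sig (constructive_indefinite_description _ (germ_surj (ys j))).
have Hp j : ys j = germ (projT2 (pick j)).
  exact: proj2_sig (constructive_indefinite_description _ (germ_surj (ys j))).
case: (lower_bound (fun j => projT1 (pick j))) => k Hk.
exists k, (fun j => drho S k _ (projT2 (pick j))) => j.
by rewrite germ_rho // Hp.
Qed.

Arguments family {L S n}.

Definition colim_act L (S : dsystem L) G
  (acts : forall i : dom S, gcar G -> univ (dstr S i) -> univ (dstr S i))
  (g : gcar G) (z : colim_univ S) : colim_univ S :=
  let p := proj1_sig (constructive_indefinite_description _ (germ_surj z)) in
  germ (acts (projT1 p) g (projT2 p)).

Arguments colim_act {L S G} acts g z.

Lemma act_germ L (S : dsystem L) G
  (acts : forall i : dom S, gcar G -> univ (dstr S i) -> univ (dstr S i))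
  (He : forall k i, dle S k i -> is_equivariant (acts i) (acts k) (drho S k i))
  g i (x : univ (dstr S i)) : colim_act acts g (germ x) = germ (acts i g x).
Proof.
rewrite /colim_act.
case: (constructive_indefinite_description _ _) => [[j y]] /= /germ_eqP [k [h1 h2 h3]].
apply/germ_eqP; exists k; split => //=.
by rewrite He // He // h3.
Qed.

Arguments act_germ {L S G acts} He g {i} x.

Lemma germ_fun L (S : dsystem L)
  (Hm : forall k i, dle S k i -> is_morphism (drho S k i))
  i f (xs : 'I_(farity f) -> univ (dstr S i)) :
  @colim_fun L S f (fun j => germ (xs j)) = germ (finterp (dstr S i) f xs).
Proof.
rewrite /colim_fun.
set P := (fun z => _).
have : P (epsilon (colim_ne S) P).
  by apply: epsilon_spec; exists (germ (finterp (dstr S i) f xs)), i, xs.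
case=> i' [xs' [Hx ->]].
have Hk j : exists k, [/\ dle S k i', dle S k i &
   drho S k i' (xs' j) = drho S k i (xs j)].
  by case/germ_eqP: (Hx j) => k [? ? ?]; exists k.
pose K j := proj1_sig (constructive_indefinite_description _ (Hk j)).
have HK j : [/\ dle S (K j) i', dle S (K j) i &
   drho S (K j) i' (xs' j) = drho S (K j) i (xs j)].
  exact: proj2_sig (constructive_indefinite_description _ (Hk j)).
case: (lower_bound K) => m0 Hm0.
case: (dle_directed _ S m0 i) => m1 [a1 b1].
case: (dle_directed _ S m1 i') => n [a2 b2].
have Hnx j : drho S n i' (xs' j) = drho S n i (xs j).
  case: (HK j) => c1 c2 c3.
  have hn : dle S n (K j) by apply: dle_trans _ _ _ _ _ a2 (dle_trans _ _ _ _ _ a1 (Hm0 j)).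
  by rewrite -(drho_comp _ _ _ _ _ _ hn c1) c3 (drho_comp _ _ _ _ _ _ hn c2).
have ni : dle S n i by apply: dle_trans _ _ _ _ _ a2 b1.
apply/germ_eqP; exists n; split => //=.
case: (Hm _ _ b2) => -> _; case: (Hm _ _ ni) => -> _.
by congr finterp; apply: functional_extensionality.
Qed.

Arguments germ_fun {L S} Hm {i f} xs.

Lemma cst_germ L (S : dsystem L)
  (Hm : forall k i, dle S k i -> is_morphism (drho S k i))
  c i : colim_cst S c = germ (cinterp (dstr S i) c).
Proof.
rewrite /colim_cst; set P := (fun z => _).
have : P (epsilon (colim_ne S) P) by apply: epsilon_spec; exists (germ (cinterp (dstr S i) c)), i.
case=> j ->.
case: (dle_directed _ S j i) => m [a b].
apply/germ_eqP; exists m; split => //=.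
by case: (Hm _ _ a) => _ [_ ->]; case: (Hm _ _ b) => _ [_ ->].
Qed.

Arguments cst_germ {L S} Hm c i.

Theorem proposition2p6p1 (C : Gcategory) (G : group) (L : language)
  (S : dsystem L)
  (acts : forall i : dom S, gcar G -> univ (dstr S i) -> univ (dstr S i))
  (HG : forall i, is_Gstructure (acts i))
  (Harrow : forall k i, dle S k i ->
     is_arrow C (acts i) (acts k) (drho S k i)) :
  exists actM : gcar G -> univ (colim S) -> univ (colim S),
    [/\ (forall g i (x : univ (dstr S i)), actM g (germ x) = germ (acts i g x)),
        is_Gstructure actM
      & forall i, is_morphism (M := dstr S i) (N := colim S) (@germ L S i) /\
                  is_equivariant (acts i) actM (@germ L S i)].
Proof.
have Hm k i (H : dle S k i) := (arrow_mor _ _ _ _ _ _ _ _ (Harrow k i H)).1.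
have He k i (H : dle S k i) := (arrow_mor _ _ _ _ _ _ _ _ (Harrow k i H)).2.
have AG := act_germ He.
exists (colim_act acts); split => //.
- split.
  + split=> [z|g h z]; case: (germ_surj z) => [[i x] ->] /=; rewrite !AG;
      by case: (HG i) => [[H1 H2] _ _ _]; rewrite ?H1 ?H2.
  + move=> g c; case: (dom_ne S) => i.
    rewrite /= (cst_germ Hm c i) AG.
    case: (HG i) => _ /(_ g c) [c' ->] _ _.
    by exists c'; rewrite /= (cst_germ Hm c' i).
  + move=> r ys gs [i [xs [Hx Hr]]].
    exists i, (fun j => acts i (gs j) (xs j)); split.
      by move=> j; rewrite -Hx AG.
    by case: (HG i) => _ _ /(_ r xs gs Hr).
  + move=> f g ys; case: (family ys) => k [xs Hx].
    have -> : ys = (fun j => germ (xs j)) by apply: functional_extensionality => j; rewrite Hx.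
    rewrite /= (germ_fun Hm) AG.
    have -> : (fun j => colim_act acts g (germ (xs j))) = (fun j => germ (acts k g (xs j))).
      by apply: functional_extensionality => j; rewrite AG.
    by rewrite (germ_fun Hm); case: (HG k) => _ _ _ ->.
- move=> i; split; last by move=> g x; rewrite AG.
  split; first by move=> f xs; rewrite /= (germ_fun Hm).
  split; first by move=> r xs H; exists i, xs.
  by move=> c; rewrite /= (cst_germ Hm c i).
Qed.
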